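(* Let $G$ act by isometries on a $\delta$-hyperbolic geodesic space $X$, let $\alpha\ge3\delta$ and let $U\subset G$ be $\alpha$-reduced at $p\in X$. Let $w\equiv u_1\cdots u_m$ and $w'\equiv u'_1\cdots u'_{m'}$ be elements of $\mathbf F(U)$ written in reduced form ($m\ge1$). If $(p,w'p)_{wp}\le\frac12|u_mp-p|$, then $w$ is a prefix of $w'$.
   Context: Hyperbolicity: $(x,z)_t\ge\min\{(x,y)_t,(y,z)_t\}-\delta$, $(x,y)_z=\frac12(|x-z|+|y-z|-|x-y|)$. $U$ finite is $\alpha$-reduced at $p$ if $U\cap U^{-1}=\varnothing$ and for distinct $u_1,u_2\in U\sqcup U^{-1}$, $(u_1p,u_2p)_p<\frac12\min\{|u_1p-p|,|u_2p-p|\}-\alpha-50\delta$. $\mathbf F(U)$ is the free group on $U$; its elements act on $X$ via their images in $G$. *)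

(* Defs.v *)
From Stdlib Require Import Reals List.
Import ListNotations.
Open Scope R_scope.

Record Group := {
  gcar :> Type;
  gmul : gcar -> gcar -> gcar;
  gone : gcar;
  ginv : gcar -> gcar;
  gmulA : forall a b c, gmul a (gmul b c) = gmul (gmul a b) c;
  gmul1l : forall a, gmul gone a = a;
  gmulVl : forall a, gmul (ginv a) a = gone
}.
Arguments gmul {_}. Arguments gone {_}. Arguments ginv {_}.

Record MetricSpace := {
  mcar :> Type;
  mdist : mcar -> mcar -> R;
  dist_refl : forall x, mdist x x = 0;
  dist_eq0 : forall x y, mdist x y = 0 -> x = y;
  dist_sym : forall x y, mdist x y = mdist y x;
  dist_tri : forall x y z, mdist x z <= mdist x y + mdist y z
}.
Arguments mdist {_}.

Definition gromov {X : MetricSpace} (x y z : X) : R :=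
  (mdist x z + mdist y z - mdist x y) / 2.

Definition geodesic (X : MetricSpace) : Prop :=
  forall x y : X, exists g : R -> X,
    g 0 = x /\ g (mdist x y) = y /\
    forall s t, 0 <= s <= mdist x y -> 0 <= t <= mdist x y ->
      mdist (g s) (g t) = Rabs (s - t).

Definition hyperbolic (X : MetricSpace) (delta : R) : Prop :=
  forall x y z t : X, gromov x z t >= Rmin (gromov x y t) (gromov y z t) - delta.

Definition isometric_action (G : Group) (X : MetricSpace) (act : G -> X -> X) : Prop :=
  (forall x, act gone x = x) /\
  (forall g h x, act (gmul g h) x = act g (act h x)) /\
  (forall g x y, mdist (act g x) (act g y) = mdist x y).

(* Letters of F(U): elements of U ⊔ U^{-1}, represented by their images in G
   (faithful since U ∩ U^{-1} = ∅ is part of being reduced). *)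
Definition letter {G : Group} (U : list G) (s : G) : Prop :=
  In s U \/ exists u, In u U /\ s = ginv u.

Definition alpha_reduced (G : Group) (X : MetricSpace) (act : G -> X -> X)
    (delta alpha : R) (U : list G) (p : X) : Prop :=
  (forall u, In u U -> ~ In (ginv u) U) /\
  (forall u1 u2, letter U u1 -> letter U u2 -> u1 <> u2 ->
     gromov (act u1 p) (act u2 p) p <
       Rmin (mdist (act u1 p) p) (mdist (act u2 p) p) / 2 - alpha - 50 * delta).

Definition reduced_word {G : Group} (U : list G) (w : list G) : Prop :=
  Forall (letter U) w /\
  ~ (exists l1 a b l2, w = l1 ++ a :: b :: l2 /\ b = ginv a).

Definition word_eval {G : Group} (w : list G) : G := fold_right gmul gone w.

(* Main.v *)
Require Import Defs.
From Stdlib Require Import Reals List Lra Classical.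
Import ListNotations.
Open Scope R_scope.

Lemma g_mulV (G : Group) (a : G) : gmul a (ginv a) = gone.
Proof.
  set (b := ginv a).
  assert (H1 : gmul b (gmul a b) = b).
  { rewrite gmulA. unfold b. rewrite gmulVl, gmul1l. reflexivity. }
  assert (H2 : gmul (ginv b) (gmul b (gmul a b)) = gone) by (rewrite H1; apply gmulVl).
  rewrite gmulA, gmulVl, gmul1l in H2. exact H2.
Qed.

Lemma g_mul1r (G : Group) (a : G) : gmul a gone = a.
Proof. rewrite <- (gmulVl _ a), gmulA, g_mulV, gmul1l. reflexivity. Qed.

Lemma g_invK (G : Group) (a : G) : ginv (ginv a) = a.
Proof.
  rewrite <- (g_mul1r _ (ginv (ginv a))), <- (gmulVl _ a), gmulA, gmulVl, gmul1l.
  reflexivity.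
Qed.

Section Main.
Variables (G : Group) (X : MetricSpace) (act : G -> X -> X).
Hypothesis Hact : isometric_action G X act.

Lemma act1 x : act gone x = x. Proof. apply Hact. Qed.
Lemma actM g h x : act (gmul g h) x = act g (act h x). Proof. apply Hact. Qed.
Lemma actD g x y : mdist (act g x) (act g y) = mdist x y. Proof. apply Hact. Qed.

Lemma act_inv_r a q : act a (act (ginv a) q) = q.
Proof. rewrite <- actM, g_mulV, act1. reflexivity. Qed.
Lemma act_inv_l a q : act (ginv a) (act a q) = q.
Proof. rewrite <- actM, gmulVl, act1. reflexivity. Qed.

Lemma gromov_act g x y z : gromov (act g x) (act g y) (act g z) = gromov x y z.
Proof. unfold gromov. rewrite !actD. reflexivity. Qed.

Lemma gromov_sym (x y z : X) : gromov x y z = gromov y x z.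
Proof. unfold gromov. rewrite (Defs.dist_sym _ x y). lra. Qed.

Lemma gromov_ge0 (x y z : X) : 0 <= gromov x y z.
Proof. unfold gromov. pose proof (Defs.dist_tri _ x z y). rewrite (Defs.dist_sym _ z y) in H. lra. Qed.

Lemma act_eval_app (A B : list G) q :
  act (word_eval (A ++ B)) q = act (word_eval A) (act (word_eval B) q).
Proof.
  induction A as [|a A IH]; simpl.
  - rewrite act1. reflexivity.
  - rewrite !actM, IH. reflexivity.
Qed.

Lemma act_eval_inv (l : list G) q :
  act (word_eval l) (act (word_eval (rev (map ginv l))) q) = q.
Proof.
  revert q; induction l as [|a l IH]; intro q; simpl.
  - rewrite !act1. reflexivity.
  - rewrite act_eval_app. simpl. rewrite g_mul1r, actM.
    rewrite IH. apply act_inv_r.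
Qed.

Fixpoint noinv (l : list G) : Prop :=
  match l with
  | a :: ((b :: _) as l') => b <> ginv a /\ noinv l'
  | _ => True
  end.

Definition NI (l : list G) : Prop :=
  forall l1 a b l2, l = l1 ++ a :: b :: l2 -> b <> ginv a.

Lemma NI_noinv l : NI l -> noinv l.
Proof.
  induction l as [|a l IH]; simpl; auto.
  destruct l as [|b l']; auto. intro H. split.
  - apply (H [] a b l'). reflexivity.
  - apply IH. intros l1 x y l2 E. apply (H (a :: l1) x y l2). rewrite E. reflexivity.
Qed.

Lemma noinv_NI l : noinv l -> NI l.
Proof.
  intros H l1. revert l H. induction l1 as [|c l1 IH]; intros l H a b l2 E; subst l.
  - simpl in H. tauto.
  - simpl in H. destruct l1 as [|d l1'].
    + simpl in H. destruct H as [_ H]. simpl in H. tauto.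
    + destruct H as [_ H]. exact (IH _ H a b l2 eq_refl).
Qed.

Lemma NI_rev l : NI l -> NI (rev (map ginv l)).
Proof.
  intros H l1 a b l2 E.
  assert (E2 : map ginv l = rev l2 ++ b :: a :: rev l1).
  { rewrite <- (rev_involutive (map ginv l)), E. rewrite rev_app_distr. simpl.
    rewrite <- !app_assoc. reflexivity. }
  assert (E3 : l = map ginv (rev l2) ++ ginv b :: ginv a :: map ginv (rev l1)).
  { rewrite <- (map_id l) at 1. rewrite <- (map_ext (fun x => ginv (ginv x)) (fun x => x)).
    2: { intro; apply g_invK. }
    rewrite <- (map_map ginv ginv), E2, map_app. reflexivity. }
  intro Hb. apply (H _ _ _ _ E3). rewrite Hb, g_invK. reflexivity.
Qed.

Lemma noinv_app r s :
  noinv r -> noinv s ->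
  (forall z s', s = z :: s' -> r <> [] -> z <> ginv (last r gone)) ->
  noinv (r ++ s).
Proof.
  induction r as [|a r IH]; intros Hr Hs Hj; simpl; auto.
  destruct r as [|b r'].
  - simpl. destruct s as [|z s']; auto. split; auto.
    apply (Hj z s'); auto. discriminate.
  - simpl in Hr. destruct Hr as [Hab Hr]. split; auto.
    change (noinv ((b :: r') ++ s)). apply IH; auto.
    intros z s' E _. apply (Hj z s' E). discriminate.
Qed.

Lemma noinv_app_r r s : noinv (r ++ s) -> noinv s.
Proof.
  induction r as [|a r IH]; simpl; auto.
  intro H. apply IH. destruct (r ++ s); simpl in *; tauto.
Qed.

Lemma last_app_ne (c l : list G) d : l <> [] -> last (c ++ l) d = last l d.
Proof.
  intro Hl. induction c as [|a c IH]; simpl; auto.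
  rewrite IH. destruct (c ++ l) eqn:E; auto.
  destruct c; simpl in E; subst; congruence.
Qed.

Lemma rev_head (l : list G) : l <> [] ->
  exists rest, rev (map ginv l) = ginv (last l gone) :: rest.
Proof.
  intro Hl. destruct (exists_last Hl) as [e [z E]]. subst l.
  rewrite last_last, map_app, rev_app_distr. simpl. eexists; reflexivity.
Qed.

Lemma last_cons_ne (a : G) l d : l <> [] -> last (a :: l) d = last l d.
Proof. destruct l; simpl; congruence. Qed.

Variables (delta alpha : R) (U : list G) (p : X).
Hypothesis Hhyp : hyperbolic X delta.
Hypothesis Halpha : alpha >= 3 * delta.
Hypothesis Hred : alpha_reduced G X act delta alpha U p.

Lemma delta_ge0 : 0 <= delta.
Proof.
  pose proof (Hhyp p p p p). unfold gromov in H. rewrite Defs.dist_refl in H.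
  unfold Rmin in H. destruct (Rle_dec _ _); lra.
Qed.

Lemma letter_inv a : letter U a -> letter U (ginv a).
Proof.
  intros [H|[u [Hu E]]].
  - right. exists a. auto.
  - left. subst. rewrite g_invK. exact Hu.
Qed.

Lemma letter_neq a : letter U a -> a <> ginv a.
Proof.
  destruct Hred as [H0 _].
  intros [H|[u [Hu E]]] Ea.
  - apply (H0 a H). rewrite <- Ea. exact H.
  - subst. rewrite g_invK in Ea. apply (H0 u Hu). rewrite Ea. exact Hu.
Qed.

Lemma red_ineq a b : letter U a -> letter U b -> a <> b ->
  gromov (act a p) (act b p) p < mdist (act a p) p / 2 - alpha - 50 * delta /\
  gromov (act a p) (act b p) p < mdist (act b p) p / 2 - alpha - 50 * delta.
Proof.
  intros Ha Hb Hab. destruct Hred as [_ H]. pose proof (H a b Ha Hb Hab).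
  pose proof (Rmin_l (mdist (act a p) p) (mdist (act b p) p)).
  pose proof (Rmin_r (mdist (act a p) p) (mdist (act b p) p)). lra.
Qed.

Lemma chain rest : forall a, Forall (letter U) (a :: rest) -> noinv (a :: rest) ->
  gromov (act a p) (act (word_eval (a :: rest)) p) p > mdist p (act a p) / 2 + delta.
Proof.
  pose proof delta_ge0 as Hd.
  induction rest as [|b rest IH]; intros a Hl Hn.
  - simpl. rewrite g_mul1r. inversion Hl; subst.
    destruct (red_ineq a (ginv a) H1 (letter_inv a H1) (letter_neq a H1)) as [H _].
    pose proof (gromov_ge0 (act a p) (act (ginv a) p) p).
    unfold gromov at 1. rewrite Defs.dist_refl, (Defs.dist_sym _ p). lra.
  - inversion Hl; subst. inversion H2; subst.
    simpl in Hn. destruct Hn as [Hba Hn].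
    pose proof (IH b H2 Hn) as IHb.
    set (Y := word_eval (b :: rest)) in *.
    change (word_eval (a :: b :: rest)) with (gmul a Y).
    set (y := act Y p) in *. set (z := act (ginv a) p).
    assert (Ez : act a z = p) by apply act_inv_r.
    rewrite actM. rewrite <- Ez at 3. rewrite gromov_act.
    assert (Edz : mdist p (act a p) = mdist z p).
    { rewrite <- Ez at 1. rewrite actD. reflexivity. }
    rewrite Edz.
    destruct (red_ineq (ginv a) b (letter_inv a H1) H3 (fun E => Hba (eq_sym E))) as [Hc1 Hc2].
    fold z in Hc1, Hc2.
    pose proof (Hhyp z y (act b p) p) as Hh.
    assert (Hsum : gromov p y z + gromov z y p = mdist p z).
    { unfold gromov. rewrite (Defs.dist_sym _ z p), (Defs.dist_sym _ z y), (Defs.dist_sym _ y p). lra. }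
    rewrite (gromov_sym y (act b p)) in Hh.
    rewrite (Defs.dist_sym _ p (act b p)) in IHb.
    rewrite (Defs.dist_sym _ p z) in Hsum.
    fold y. unfold Rmin in Hh. destruct (Rle_dec _ _); lra.
Qed.

Lemma decomp (w w' : list G) :
  (exists l, w' = w ++ l) \/
  exists c x s, w = c ++ x :: s /\ (w' = c \/ exists y t, w' = c ++ y :: t /\ y <> x).
Proof.
  revert w'. induction w as [|x s IH]; intro w'.
  - left. exists w'. reflexivity.
  - destruct w' as [|y t].
    + right. exists [], x, s. split; auto.
    + destruct (classic (y = x)) as [E|E].
      * subst. destruct (IH t) as [[l Hl]|[c [x' [s' [E1 [E2|[y' [t' [E2 E3]]]]]]]]].
        -- left. exists l. subst. reflexivity.
        -- right. exists (x :: c), x', s'. subst. split; auto.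
        -- right. exists (x :: c), x', s'. subst. split; auto. right. exists y', t'. auto.
      * right. exists [], x, s. split; auto. right. exists y, t. auto.
Qed.

End Main.

Theorem mainTheorem11 (G : Group) (X : MetricSpace) (act : G -> X -> X)
  (delta alpha : R) (U : list G) (p : X) (w w' : list G) :
  isometric_action G X act ->
  geodesic X ->
  hyperbolic X delta ->
  alpha >= 3 * delta ->
  alpha_reduced G X act delta alpha U p ->
  reduced_word U w -> reduced_word U w' ->
  w <> [] ->
  gromov p (act (word_eval w') p) (act (word_eval w) p)
    <= mdist (act (last w gone) p) p / 2 ->
  exists l, w' = w ++ l.
Proof.
  intros Hact Hgeo Hhyp Halpha Hred [Hwl Hwn] [Hw'l Hw'n] Hne Hgp.
  destruct (decomp G w w') as [H|[c [x [s [Ew Hw']]]]]; [exact H| exfalso].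
  pose proof (delta_ge0 X delta p Hhyp) as Hd.
  assert (NIw : forall l, ~ (exists l1 a b l2, l = l1 ++ a :: b :: l2 /\ b = ginv a) -> noinv G l).
  { intros l Hl. apply NI_noinv. intros l1 a b l2 E Eb. apply Hl. exists l1, a, b, l2. auto. }
  assert (Frev : forall l, Forall (letter U) l -> Forall (letter U) (rev (map ginv l))).
  { intros l Hl. apply Forall_rev. apply Forall_map. eapply Forall_impl; [|exact Hl].
    intros a Ha. apply (letter_inv G U a Ha). }
  assert (Nrev : forall l, noinv G l -> noinv G (rev (map ginv l))).
  { intros l Hl. apply NI_noinv, NI_rev, noinv_NI. exact Hl. }
  set (um := last w gone).
  assert (Eum : um = last (x :: s) gone).
  { unfold um. rewrite Ew. apply last_app_ne. discriminate. }
  pose proof (NIw w Hwn) as Nw. pose proof (NIw w' Hw'n) as Nw'.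
  assert (Nxs : noinv G (x :: s)) by (rewrite Ew in Nw; exact (noinv_app_r G _ _ Nw)).
  assert (Fxs : Forall (letter U) (x :: s)) by (rewrite Ew in Hwl; apply Forall_app in Hwl; tauto).
  assert (Hchain : forall rest, Forall (letter U) (ginv um :: rest) -> noinv G (ginv um :: rest) ->
     gromov (act (ginv um) p) (act (word_eval (ginv um :: rest)) p) p >
       mdist p (act (ginv um) p) / 2 + delta).
  { intros rest H1 H2. exact (chain G X act Hact delta alpha U p Hhyp Halpha Hred rest (ginv um) H1 H2). }
  assert (Hdist : mdist p (act (ginv um) p) = mdist (act um p) p).
  { rewrite <- (actD G X act Hact um p (act (ginv um) p)).
    rewrite (act_inv_r G X act Hact um p). reflexivity. }
  destruct (rev_head G w Hne) as [rest1 Er1]. fold um in Er1.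
  assert (C1 := Hchain rest1).
  rewrite <- Er1 in C1.
  specialize (C1 (Frev w Hwl) (Nrev w Nw)).
  rewrite <- (gromov_act G X act Hact (word_eval w)), act_eval_inv in C1 by exact Hact.
  destruct (rev_head G (x :: s) ltac:(discriminate)) as [rest2 Er2]. rewrite <- Eum in Er2.
  assert (Hv : exists rest, Forall (letter U) (ginv um :: rest) /\ noinv G (ginv um :: rest) /\
     act (word_eval w) (act (word_eval (ginv um :: rest)) p) = act (word_eval w') p).
  { destruct Hw' as [Ew'|[y [t [Ew' Hyx]]]].
    - exists rest2. rewrite <- Er2. split; [|split].
      + apply Frev; exact Fxs.
      + apply Nrev; exact Nxs.
      + rewrite Ew, Ew', act_eval_app by exact Hact. rewrite act_eval_inv by exact Hact. reflexivity.
    - exists (rest2 ++ y :: t). change (ginv um :: rest2 ++ y :: t) with ((ginv um :: rest2) ++ y :: t).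
      rewrite <- Er2. split; [|split].
      + apply Forall_app. split; [apply Frev; exact Fxs|].
        rewrite Ew' in Hw'l. apply Forall_app in Hw'l. tauto.
      + apply noinv_app.
        * apply Nrev; exact Nxs.
        * rewrite Ew' in Nw'. exact (noinv_app_r G _ _ Nw').
        * intros z s' Ez _. injection Ez as Ez1 Ez2. subst z.
          simpl. rewrite last_last, g_invK. exact Hyx.
      + rewrite Ew, Ew', !act_eval_app by exact Hact.
        rewrite act_eval_inv by exact Hact. reflexivity. }
  destruct Hv as [rest [Hv1 [Hv2 Hv3]]].
  pose proof (Hchain rest Hv1 Hv2) as C2.
  rewrite <- (gromov_act G X act Hact (word_eval w)), Hv3 in C2.
  set (Q := act (word_eval w) (act (ginv um) p)) in *.
  set (W := act (word_eval w) p) in *.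
  pose proof (Hhyp p Q (act (word_eval w') p) W) as Hh.
  rewrite (gromov_sym X p Q) in Hh.
  rewrite Hdist in C1, C2. fold um in Hgp.
  unfold Rmin in Hh. destruct (Rle_dec _ _); lra.
Qed.
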